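(* Let $X$, $Y$ be disjoint sets of cardinality at least two, $M\le\mathrm{Sym}(X)$ and $N\le\mathrm{Sym}(Y)$ nontrivial permutation groups, $T$ the $(|X|,|Y|)$-biregular tree and $c$ a legal colouring. Let $a$ be any arc of $T$ and $G:=U_c(M,N)$. Then for every $h\in G_a$ (the subgroup fixing both $o(a)$ and $t(a)$) there exists $g\in G$ such that $g$ fixes $T_{\overline{a}}$ pointwise and $g|_{T_a} = h|_{T_a}$.
   Context: $T$ has natural bipartition $VT=V_X\sqcup V_Y$ (vertices in $V_X$ have valency $|X|$, in $V_Y$ valency $|Y|$). An arc is an ordered pair $a=(o(a),t(a))$ of adjacent vertices, and $\overline{a}=(t(a),o(a))$. $T_a$ denotes the connected component of $T$ with the edge $\{o(a),t(a)\}$ removed that contains $o(a)$, and $T_{\overline a}$ the component containing $t(a)$. $A(v)$, $\overline{A}(v)$ are the sets of arcs with origin, resp. terminus, $v$. A legal colouring is a map $c:AT\to X\cup Y$ restricting to a bijection $A(v)\to X$ for $v\in V_X$, to a bijection $A(v)\to Y$ for $v\in V_Y$, and constant on each $\overline{A}(v)$. $U_c(M,N)$ is the group of $g\in\mathrm{Aut}(T)$ with $gV_X=V_X$ and $c|_{A(gv)}\circ g|_{A(v)}\circ(c|_{A(v)})^{-1}$ in $M$ for $v\in V_X$ and in $N$ for $v\in V_Y$. *)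

(* Defs.v *)
From Stdlib Require Import List Relations.
Import ListNotations.
Set Implicit Arguments.

Section Defs.
Variables (X Y V : Type).

Definition bijective_map (A : Type) (f : A -> A) : Prop :=
  exists g : A -> A, (forall a, g (f a) = a) /\ (forall a, f (g a) = a).

Definition perm_group (A : Type) (M : (A -> A) -> Prop) : Prop :=
  (forall s, M s -> bijective_map s) /\
  M (fun a => a) /\
  (forall s t, M s -> M t -> M (fun a => s (t a))) /\
  (forall s, M s -> exists t, M t /\ (forall a, t (s a) = a) /\ (forall a, s (t a) = a)).

Definition nontrivial_group (A : Type) (M : (A -> A) -> Prop) : Prop :=
  exists s, M s /\ exists a, s a <> a.

Definition card_ge2 (A : Type) : Prop := exists a b : A, a <> b.

Variable adj : V -> V -> Prop.

Fixpoint walk (l : list V) : Prop :=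
  match l with
  | u :: ((v :: _) as l') => adj u v /\ walk l'
  | _ => True
  end.

(* a (simple) cycle: closed walk v0 v1 ... vn = v0 with n >= 3 edges and
   v0, ..., v_{n-1} pairwise distinct *)
Definition has_cycle : Prop :=
  exists (v0 : V) (l : list V),
    3 <= length l /\ walk (v0 :: l) /\ last l v0 = v0 /\ NoDup l.

Definition connected : Prop := forall u v, clos_refl_trans V adj u v.

(** T is a tree whose natural bipartition is VT = V_X ⊔ V_Y (V_X = {v | VX v}). *)
Definition bip_tree (VX : V -> bool) : Prop :=
  (forall u v, adj u v -> adj v u) /\
  (forall v, ~ adj v v) /\
  connected /\ ~ has_cycle /\
  (forall u v, adj u v -> VX u <> VX v).

(** Legal colouring c : AT -> X ⊔ Y (arcs are pairs (u,v) with adj u v). *)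
Definition legal_colouring (VX : V -> bool) (c : V -> V -> X + Y) : Prop :=
  (forall v, VX v = true ->
     (forall w, adj v w -> exists x, c v w = inl x) /\
     (forall x, exists w, adj v w /\ c v w = inl x /\
                  forall w', adj v w' -> c v w' = inl x -> w' = w)) /\
  (forall v, VX v = false ->
     (forall w, adj v w -> exists y, c v w = inr y) /\
     (forall y, exists w, adj v w /\ c v w = inr y /\
                  forall w', adj v w' -> c v w' = inr y -> w' = w)) /\
  (forall v u u', adj u v -> adj u' v -> c u v = c u' v).

Definition is_aut (g : V -> V) : Prop :=
  bijective_map g /\ forall u v, adj u v <-> adj (g u) (g v).

(** The local action c|_{A(gv)} ∘ g|_{A(v)} ∘ (c|_{A(v)})^{-1} lies in M
    (for v in V_X), resp. in N (for v in V_Y). *)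
Definition local_in_X (c : V -> V -> X + Y) (M : (X -> X) -> Prop) (g : V -> V) (v : V) :=
  exists s, M s /\ forall w x, adj v w -> c v w = inl x -> c (g v) (g w) = inl (s x).
Definition local_in_Y (c : V -> V -> X + Y) (N : (Y -> Y) -> Prop) (g : V -> V) (v : V) :=
  exists s, N s /\ forall w y, adj v w -> c v w = inr y -> c (g v) (g w) = inr (s y).

Definition in_U (VX : V -> bool) (c : V -> V -> X + Y)
    (M : (X -> X) -> Prop) (N : (Y -> Y) -> Prop) (g : V -> V) : Prop :=
  is_aut g /\ (forall v, VX (g v) = VX v) /\
  (forall v, VX v = true -> local_in_X c M g v) /\
  (forall v, VX v = false -> local_in_Y c N g v).

Definition adj_minus (o t : V) (u v : V) : Prop :=
  adj u v /\ ~ ((u = o /\ v = t) \/ (u = t /\ v = o)).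

(* T_a for a = (o,t): the component of T - {o,t} containing o *)
Definition half_tree (o t : V) (w : V) : Prop :=
  clos_refl_trans V (adj_minus o t) o w.

End Defs.

(* Main.v *)
Require Import Defs.
From Stdlib Require Import List Relations Classical ClassicalDescription Lia.
Import ListNotations.

Lemma last_cons_eq (V:Type) (l : list V) : forall a d, last (a::l) d = last l a.
Proof.
  induction l as [|b l IH]; intros a d; [reflexivity|].
  change (last (a::b::l) d) with (last (b::l) d).
  rewrite (IH b d), (IH b a). reflexivity.
Qed.

Lemma last_app_cons (V:Type) (a : list V) : forall x b d, last (a ++ x :: b) d = last b x.
Proof.
  induction a as [|y a IH]; intros x b d.
  - simpl. apply last_cons_eq.
  - simpl (_ ++ _). rewrite last_cons_eq. apply IH.
Qed.

Lemma walk_tail (V:Type) (R:V->V->Prop) y l : walk R (y::l) -> walk R l.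
Proof. destruct l; simpl; tauto. Qed.

Lemma walk_suffix (V:Type) (R:V->V->Prop) a l : walk R (a ++ l) -> walk R l.
Proof.
  induction a as [|y a IH]; simpl; [auto|].
  intro H. apply IH. apply (walk_tail _ R y). exact H.
Qed.

Lemma walk_mono (V:Type) (R S:V->V->Prop) (H: forall u v, R u v -> S u v) l :
  walk R l -> walk S l.
Proof.
  induction l as [|a l IH]; [auto|].
  destruct l as [|b l]; simpl; [auto|].
  intros [H1 H2]; split; [auto| apply IH; exact H2].
Qed.

Lemma simple_path (V:Type) (R:V->V->Prop) x y : clos_refl_trans V R x y ->
  exists l, walk R (x::l) /\ NoDup (x::l) /\ last l x = y.
Proof.
  intro H. apply clos_rt_rt1n in H. induction H as [x|x x1 y Hx Hr IH].
  - exists []. simpl. split; [auto|split; [|reflexivity]].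
    constructor; [intros []|constructor].
  - destruct IH as [l [Hw [Hn Hl]]].
    destruct (classic (In x (x1::l))) as [Hin|Hnin].
    + apply in_split in Hin. destruct Hin as [a [b Hab]].
      exists b. rewrite Hab in Hw, Hn. split; [|split].
      * eapply walk_suffix; exact Hw.
      * eapply NoDup_app_remove_l; exact Hn.
      * rewrite <- Hl. rewrite <- (last_cons_eq _ l x1 x1). rewrite Hab.
        rewrite last_app_cons. reflexivity.
    + exists (x1::l). split; [|split].
      * change (R x x1 /\ walk R (x1::l)). split; auto.
      * constructor; auto.
      * rewrite last_cons_eq. exact Hl.
Qed.

Lemma crt_sym (V:Type) (R:V->V->Prop) (Hs: forall u v, R u v -> R v u) x y :
 clos_refl_trans V R x y -> clos_refl_trans V R y x.
Proof. induction 1; [apply rt_step; auto | apply rt_refl | eapply rt_trans; eauto]. Qed.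

Lemma crt_mono (V:Type) (R S:V->V->Prop) (H: forall u v, R u v -> S u v) x y :
 clos_refl_trans V R x y -> clos_refl_trans V S x y.
Proof. induction 1; [apply rt_step; auto | apply rt_refl | eapply rt_trans; eauto]. Qed.

Lemma crt_map (V:Type) (R:V->V->Prop) (f:V->V) (H: forall u v, R u v -> R (f u) (f v)) x y :
 clos_refl_trans V R x y -> clos_refl_trans V R (f x) (f y).
Proof. induction 1; [apply rt_step; auto | apply rt_refl | eapply rt_trans; eauto]. Qed.

Theorem lemma3p11 (X Y V : Type) (adj : V -> V -> Prop) (VX : V -> bool)
  (c : V -> V -> X + Y) (M : (X -> X) -> Prop) (N : (Y -> Y) -> Prop)
  (hX : card_ge2 X) (hY : card_ge2 Y)
  (hM : perm_group M) (hN : perm_group N)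
  (hMnt : nontrivial_group M) (hNnt : nontrivial_group N)
  (hT : bip_tree adj VX) (hc : legal_colouring adj VX c)
  (o t : V) (ha : adj o t)
  (h : V -> V) (hG : in_U adj VX c M N h) (ho : h o = o) (ht : h t = t) :
  exists g : V -> V, in_U adj VX c M N g /\
    (forall w, half_tree adj t o w -> g w = w) /\
    (forall w, half_tree adj o t w -> g w = h w).
Proof.
  destruct hT as [hsym [hirr [_ [hnc _]]]].
  destruct hG as [[[hi [hi1 hi2]] hadj] [hVX [hlX hlY]]].
  destruct hM as [_ [hMid _]]. destruct hN as [_ [hNid _]].
  unfold half_tree.
  assert (hinj : forall u v, h u = h v -> u = v).
  { intros u v E. rewrite <- (hi1 u), <- (hi1 v), E. reflexivity. }
  assert (ams : forall u v, adj_minus adj o t u v -> adj_minus adj o t v u).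
  { intros u v [H1 H2]. split; [auto|].
    intros [[E1 E2]|[E1 E2]]; apply H2; [right|left]; split; assumption. }
  assert (nopath : ~ clos_refl_trans V (adj_minus adj o t) t o).
  { intro Hp. apply simple_path in Hp. destruct Hp as [l [Hw [Hn Hl]]].
    apply hnc. exists o, (t::l).
    destruct l as [|b l].
    - simpl in Hl. exfalso. rewrite Hl in ha. exact (hirr _ ha).
    - destruct l as [|c0 l].
      + simpl in Hl. subst b. destruct Hw as [[_ Hf] _].
        exfalso; apply Hf; right; auto.
      + split; [simpl; lia|]. split; [|split].
        * change (adj o t /\ walk adj (t::b::c0::l)). split; [exact ha|].
          apply (walk_mono _ (adj_minus adj o t) adj (fun u v A => proj1 A)); exact Hw.
        * rewrite last_cons_eq. exact Hl.
        * exact Hn. }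
  set (Ha := fun w => clos_refl_trans V (adj_minus adj o t) o w).
  assert (disj : forall w, Ha w -> clos_refl_trans V (adj_minus adj t o) t w -> False).
  { intros w H1 H2. apply nopath. eapply rt_trans.
    - apply (crt_mono _ (adj_minus adj t o)); [|exact H2].
      intros u v [A B]; split; [exact A|]; intros [C|C]; apply B; [right|left]; exact C.
    - apply crt_sym; [exact ams| exact H1]. }
  assert (cross : forall p q, Ha p -> ~ Ha q -> adj p q -> p = o /\ q = t).
  { intros p q Hp Hq Hpq.
    destruct (classic ((p = o /\ q = t) \/ (p = t /\ q = o))) as [[E|[E1 E2]]|E].
    - exact E.
    - exfalso; apply Hq; rewrite E2; apply rt_refl.
    - exfalso; apply Hq. eapply rt_trans; [exact Hp|]. apply rt_step. split; assumption. }
  assert (hpres : forall w, Ha w -> Ha (h w)).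
  { intros w Hw.
    assert (Hst : forall u v, adj_minus adj o t u v -> adj_minus adj o t (h u) (h v)).
    { intros u v [A B]. split; [apply (proj1 (hadj u v)); exact A|].
      intros [[E1 E2]|[E1 E2]]; apply B; [left|right]; split; apply hinj; congruence. }
    pose proof (crt_map _ _ h Hst _ _ Hw) as K. rewrite ho in K. exact K. }
  assert (hio : hi o = o) by (rewrite <- ho at 1; apply hi1).
  assert (hit : hi t = t) by (rewrite <- ht at 1; apply hi1).
  assert (hipres : forall w, Ha w -> Ha (hi w)).
  { intros w Hw.
    assert (hiinj : forall u v, hi u = hi v -> u = v).
    { intros u v E. rewrite <- (hi2 u), <- (hi2 v), E. reflexivity. }
    assert (Hst : forall u v, adj_minus adj o t u v -> adj_minus adj o t (hi u) (hi v)).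
    { intros u v [A B]. split.
      - apply (proj2 (hadj _ _)). rewrite !hi2. exact A.
      - intros [[E1 E2]|[E1 E2]]; apply B; [left|right]; split; apply hiinj; congruence. }
    pose proof (crt_map _ _ hi Hst _ _ Hw) as K. rewrite hio in K. exact K. }
  assert (Hex : exists g : V -> V, (forall w, Ha w -> g w = h w) /\ (forall w, ~Ha w -> g w = w)).
  { exists (fun w => if excluded_middle_informative (Ha w) then h w else w).
    split; intros w Hw; destruct (excluded_middle_informative (Ha w)); tauto. }
  destruct Hex as [g [gin gout]].
  assert (Hexi : exists g : V -> V, (forall w, Ha w -> g w = hi w) /\ (forall w, ~Ha w -> g w = w)).
  { exists (fun w => if excluded_middle_informative (Ha w) then hi w else w).
    split; intros w Hw; destruct (excluded_middle_informative (Ha w)); tauto. }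
  destruct Hexi as [gi [giin giout]].
  assert (gnb_in : forall v w, Ha v -> adj v w -> g w = h w).
  { intros v w Hv A. destruct (classic (Ha w)) as [Hw|Hw]; [auto|].
    destruct (cross v w Hv Hw A) as [_ E]. rewrite gout by exact Hw. rewrite E, ht. reflexivity. }
  assert (gnb_out : forall v w, ~Ha v -> adj v w -> g w = w).
  { intros v w Hv A. destruct (classic (Ha w)) as [Hw|Hw]; [|auto].
    destruct (cross w v Hw Hv (hsym _ _ A)) as [E _]. rewrite gin by exact Hw. rewrite E, ho. reflexivity. }
  assert (io : forall u v, Ha u -> ~ Ha v -> (adj u v <-> adj (h u) v)).
  { intros u v Hu Hv. split; intro A.
    - destruct (cross u v Hu Hv A) as [E1 E2]. rewrite E1, E2, ho. exact ha.
    - destruct (cross (h u) v (hpres u Hu) Hv A) as [E1 E2].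
      assert (Euo : u = o) by (apply hinj; congruence). rewrite Euo, E2; exact ha. }
  exists g. split; [|split].
  - split; [split|split; [|split]].
    + exists gi. split; intro a; destruct (classic (Ha a)) as [Hx|Hx].
      * rewrite (gin a Hx), (giin _ (hpres a Hx)). apply hi1.
      * rewrite (gout a Hx), (giout a Hx). reflexivity.
      * rewrite (giin a Hx), (gin _ (hipres a Hx)). apply hi2.
      * rewrite (giout a Hx), (gout a Hx). reflexivity.
    + intros u v. destruct (classic (Ha u)) as [Hu|Hu]; destruct (classic (Ha v)) as [Hv|Hv].
      * rewrite (gin u Hu), (gin v Hv). apply hadj.
      * rewrite (gin u Hu), (gout v Hv). apply io; auto.
      * rewrite (gout u Hu), (gin v Hv). split; intro A; apply hsym; apply hsym in A;
          [apply (io v u Hv Hu) | apply (io v u Hv Hu)]; exact A.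
      * rewrite (gout u Hu), (gout v Hv). tauto.
    + intro v. destruct (classic (Ha v)) as [Hv|Hv].
      * rewrite (gin v Hv). apply hVX.
      * rewrite (gout v Hv). reflexivity.
    + intros v Hvx. destruct (classic (Ha v)) as [Hv|Hv].
      * destruct (hlX v Hvx) as [s [Hs Hs2]]. exists s; split; auto.
        intros w x A C. rewrite (gin v Hv), (gnb_in v w Hv A). apply Hs2; auto.
      * exists (fun a => a); split; [exact hMid|].
        intros w x A C. rewrite (gout v Hv), (gnb_out v w Hv A). exact C.
    + intros v Hvx. destruct (classic (Ha v)) as [Hv|Hv].
      * destruct (hlY v Hvx) as [s [Hs Hs2]]. exists s; split; auto.
        intros w x A C. rewrite (gin v Hv), (gnb_in v w Hv A). apply Hs2; auto.
      * exists (fun a => a); split; [exact hNid|].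
        intros w x A C. rewrite (gout v Hv), (gnb_out v w Hv A). exact C.
  - intros w Hw. apply gout. intro Hw'. exact (disj w Hw' Hw).
  - intros w Hw. apply gin. exact Hw.
Qed.
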